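(* Let $d\ge 1$ and $c\ge 1$, let $\mathcal C$ be a finite collection of $c$-fat objects in $\mathbb R^d$, and let $G$ be the intersection graph of $\mathcal C$. Let $t\ge 0$ be an integer and let $\mathcal C^t$ be a collection of nonempty subsets of $\mathcal C$ such that for each $\mathcal X\in\mathcal C^t$ the induced subgraph $G_{\mathcal X}$ of $G$ on $\mathcal X$ is connected and has diameter at most $t$. Identify each $\mathcal X\in\mathcal C^t$ with the object $\bigcup_{O\in\mathcal X}O\subseteq\mathbb R^d$. Then $\mathcal C^t$ is a collection of $c'$-fat objects in $\mathbb R^d$ with $c'\le C_d\cdot c\cdot (t+1)^{2d}$, where $C_d$ is a constant depending only on $d$.
   Context: An object is a bounded subset of $\mathbb R^d$. The size of an object is the side length of its smallest enclosing axis-parallel hypercube; a box of size $r$ is an axis-parallel hypercube of side length $r$. A collection $\mathcal C$ of objects in $\mathbb R^d$ is $c$-fat (for $c\ge 1$) if for every $r\ge 0$ and every box $B$ of size $r$ there is a set of at most $c$ points of $\mathbb R^d$ such that every object of $\mathcal C$ of size at least $r$ that intersects $B$ contains at least one of these points. The intersection graph of $\mathcal C$ has vertex set $\mathcal C$, two objects being adjacent iff they intersect. *)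

(* Defs.v *)
From Stdlib Require Vectors.Fin.
From Stdlib Require Import Reals List.
Open Scope R_scope.

Definition point (d : nat) : Type := Fin.t d -> R.

Definition Obj (d : nat) : Type := point d -> Prop.

Definition obj_bounded {d : nat} (O : Obj d) : Prop :=
  exists M : R, forall x, O x -> forall i, Rabs (x i) <= M.

Definition box {d : nat} (a : point d) (r : R) : Obj d :=
  fun x => forall i, a i <= x i <= a i + r.

Definition subset {d : nat} (A B : Obj d) : Prop := forall x, A x -> B x.

Definition is_size {d : nat} (O : Obj d) (s : R) : Prop :=
  0 <= s /\ (exists a, subset O (box a s)) /\
  (forall (s' : R) (a : point d), 0 <= s' -> subset O (box a s') -> s <= s').

Definition size_at_least {d : nat} (O : Obj d) (r : R) : Prop :=
  exists s, is_size O s /\ r <= s.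

Definition intersects {d : nat} (A B : Obj d) : Prop := exists x, A x /\ B x.

Definition fat {d : nat} (Coll : Obj d -> Prop) (c : R) : Prop :=
  forall (r : R) (a : point d), 0 <= r ->
    exists P : list (point d), INR (length P) <= c /\
      forall O, Coll O -> size_at_least O r -> intersects O (box a r) ->
        exists p, In p P /\ O p.

Definition adj {d : nat} (O O' : Obj d) : Prop := O <> O' /\ intersects O O'.

Inductive walk {d : nat} (X : Obj d -> Prop) : Obj d -> Obj d -> nat -> Prop :=
| walk0 : forall O, X O -> walk X O O 0
| walkS : forall O O1 O' n, X O -> adj O O1 -> walk X O1 O' n -> walk X O O' (S n).

Definition connected_diam_le {d : nat} (X : Obj d -> Prop) (t : nat) : Prop :=
  forall O O', X O -> X O' -> exists n, (n <= t)%nat /\ walk X O O' n.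

Definition union_obj {d : nat} (X : Obj d -> Prop) : Obj d :=
  fun x => exists O, X O /\ O x.

(* Main.v *)
Require Import Defs.
From Stdlib Require Import Reals List Lra Lia Classical ClassicalEpsilon FunctionalExtensionality.
Open Scope R_scope.

Lemma Rabs_le_between (x M : R) : Rabs x <= M -> -M <= x <= M.
Proof. unfold Rabs; destruct (Rcase_abs x); lra. Qed.

Lemma box_of_diff {d : nat} (O : Obj d) (w : R) :
  (exists x, O x) -> obj_bounded O ->
  (forall x x' i, O x -> O x' -> x i - x' i <= w) ->
  exists a, subset O (box a w).
Proof.
  intros [x0 Hx0] [M HM] Hd.
  pose (E := fun (i : Fin.t d) (y : R) => exists x, O x /\ y = - x i).
  assert (Hb : forall i, bound (E i)).
  { intro i. exists M. intros y [x [Hx ->]]. specialize (HM x Hx i).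
    apply Rabs_le_between in HM. lra. }
  assert (Hn : forall i, exists y, E i y).
  { intro i. exists (- x0 i). exists x0. auto. }
  exists (fun i => - proj1_sig (completeness (E i) (Hb i) (Hn i))).
  intros x Hx i.
  destruct (completeness (E i) (Hb i) (Hn i)) as [m [Hub Hlub]]. simpl.
  split.
  - assert (- x i <= m) by (apply Hub; exists x; auto). lra.
  - assert (m <= w - x i).
    { apply Hlub. intros y [x' [Hx' ->]]. specialize (Hd x x' i Hx Hx'). lra. }
    lra.
Qed.

Lemma size_exists {d : nat} (O : Obj d) :
  (exists x, O x) -> obj_bounded O -> exists s, is_size O s.
Proof.
  intros Hne Hbd. pose proof Hbd as [M HM].
  pose (D := fun y => y = 0 \/ exists x x' i, O x /\ O x' /\ y = x i - x' i).
  assert (Hb : bound D).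
  { exists (2 * Rabs M). intros y [-> | [x [x' [i [Hx [Hx' ->]]]]]].
    - pose proof (Rabs_pos M). lra.
    - pose proof (HM x Hx i) as H1. pose proof (HM x' Hx' i) as H2.
      apply Rabs_le_between in H1. apply Rabs_le_between in H2.
      pose proof (Rle_abs M). lra. }
  destruct (completeness D Hb (ex_intro _ 0 (or_introl eq_refl))) as [s [Hub Hlub]].
  exists s. split; [|split].
  - apply Hub. left. reflexivity.
  - apply box_of_diff; auto. intros x x' i Hx Hx'. apply Hub. right. eauto 10.
  - intros s' a Hs' Hsub. apply Hlub. intros y [-> | [x [x' [i [Hx [Hx' ->]]]]]]; auto.
    pose proof (Hsub x Hx i). pose proof (Hsub x' Hx' i). lra.
Qed.

Definition small {d : nat} (r' : R) (O : Obj d) : Prop := exists a, subset O (box a r').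

Lemma walk_diam {d : nat} (r' : R) (X : Obj d -> Prop) O O' n :
  walk X O O' n -> (forall O, X O -> small r' O) ->
  forall x x' i, O x -> O' x' ->
    - (INR (S n) * r') <= x i - x' i <= INR (S n) * r'.
Proof.
  intros Hw Hall. induction Hw as [O HO | O O1 O' n HO Hadj Hw IH]; intros x x' i Hx Hx'.
  - destruct (Hall O HO) as [a Ha]. pose proof (Ha x Hx i). pose proof (Ha x' Hx' i).
    simpl. lra.
  - destruct (Hall O HO) as [a Ha]. destruct Hadj as [_ [y [Hy Hy1]]].
    pose proof (Ha x Hx i). pose proof (Ha y Hy i).
    specialize (IH y x' i Hy1 Hx'). rewrite S_INR. lra.
Qed.

Lemma walk_first {d : nat} (r' : R) (X : Obj d -> Prop) O O' n :
  0 <= r' ->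
  walk X O O' n -> ~ small r' O' ->
  forall (b : point d) L m x, O x -> (forall i, b i - m <= x i <= b i + L + m) ->
  exists O'' y, X O'' /\ ~ small r' O'' /\ O'' y /\
    forall i, b i - (m + INR n * r') <= y i <= b i + L + (m + INR n * r').
Proof.
  intros Hr' Hw. induction Hw as [O HO | O O1 O' n HO Hadj Hw IH];
    intros Hns b L m x Hx Hbx.
  - exists O, x. repeat split; auto; simpl; specialize (Hbx i); lra.
  - destruct (classic (small r' O)) as [[a Ha] | Hn].
    + destruct Hadj as [_ [y [Hy Hy1]]].
      destruct (IH Hns b L (m + r') y Hy1) as [O'' [z [H1 [H2 [H3 H4]]]]].
      { intro i. pose proof (Ha x Hx i). pose proof (Ha y Hy i). specialize (Hbx i). lra. }
      exists O'', z. repeat split; auto; specialize (H4 i); rewrite S_INR; lra.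
    + exists O, x. repeat split; auto; specialize (Hbx i);
      pose proof (pos_INR (S n)); pose proof (Rmult_le_pos _ _ H Hr'); lra.
Qed.

Lemma cell (n : nat) (r' y : R) : 0 < r' -> 0 <= y <= INR (S n) * r' ->
  exists k, (k <= n)%nat /\ INR k * r' <= y <= INR k * r' + r'.
Proof.
  revert y. induction n as [|n IH]; intros y Hr Hy.
  - exists 0%nat. simpl in *. split; [lia|lra].
  - destruct (Rle_or_lt y r') as [Hle|Hlt].
    + exists 0%nat. simpl. split; [lia|lra].
    + destruct (IH (y - r')) as [k [Hk Hk2]]; auto.
      { rewrite !S_INR in *. lra. }
      exists (S k). rewrite S_INR. split; [lia|lra].
Qed.

Fixpoint all_fin (d : nat) : list (Fin.t d) :=
  match d with
  | O => nil
  | S d' => Fin.F1 :: map Fin.FS (all_fin d')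
  end.

Lemma all_fin_in d (i : Fin.t d) : In i (all_fin d).
Proof. induction i; simpl; auto. right. apply in_map. auto. Qed.

Lemma all_fin_len d : length (all_fin d) = d.
Proof. induction d; simpl; auto. rewrite length_map. auto. Qed.

Definition upd {d : nat} (f : Fin.t d -> nat) (i : Fin.t d) (k : nat) : Fin.t d -> nat :=
  fun j => if Fin.eq_dec j i then k else f j.

Fixpoint grid {d : nat} (N : nat) (idx : list (Fin.t d)) : list (Fin.t d -> nat) :=
  match idx with
  | nil => (fun _ => 0%nat) :: nil
  | i :: idx' => flat_map (fun f => map (fun k => upd f i k) (seq 0 N)) (grid N idx')
  end.

Lemma grid_complete {d : nat} (N : nat) (P : Fin.t d -> nat -> Prop) idx :
  (forall i, In i idx -> exists k, (k < N)%nat /\ P i k) ->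
  exists f, In f (grid N idx) /\ forall i, In i idx -> P i (f i).
Proof.
  induction idx as [|i0 idx IH]; intros H.
  - exists (fun _ => 0%nat). simpl. split; auto. intros i [].
  - destruct IH as [f [Hf Hp]]. { intros i Hi. apply H. right. auto. }
    destruct (H i0 (or_introl eq_refl)) as [k0 [Hk0 Hp0]].
    exists (upd f i0 k0). split.
    + simpl. apply in_flat_map. exists f. split; auto. apply in_map. apply in_seq. lia.
    + intros i Hi. unfold upd. destruct (Fin.eq_dec i i0) as [-> | Hne]; auto.
      apply Hp. destruct Hi as [-> | Hi]; [congruence | auto].
Qed.

Lemma len_flat {A B : Type} (f : A -> list B) (g : list A) (c : R) :
  0 <= c -> (forall a, INR (length (f a)) <= c) ->
  INR (length (flat_map f g)) <= INR (length g) * c.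
Proof.
  intros Hc H. induction g as [|a g IH]; cbn [flat_map].
  - simpl. lra.
  - rewrite length_app, plus_INR. change (length (a :: g)) with (S (length g)).
    rewrite S_INR. specialize (H a). lra.
Qed.

Lemma grid_len {d : nat} (N : nat) (idx : list (Fin.t d)) :
  INR (length (grid N idx)) <= INR N ^ length idx.
Proof.
  induction idx as [|i idx IH]; simpl.
  - lra.
  - eapply Rle_trans. apply len_flat with (c := INR N). apply pos_INR.
    intro f. rewrite length_map, length_seq. lra.
    rewrite Rmult_comm. apply Rmult_le_compat_l. apply pos_INR. auto.
Qed.

Lemma list_bound {d : nat} (l : list (Obj d)) :
  (forall O, In O l -> obj_bounded O) ->
  exists M, forall O x i, In O l -> O x -> Rabs (x i) <= M.
Proof.
  induction l as [|O0 l IH]; intros H.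
  - exists 0. intros O x i [].
  - destruct IH as [M HM]. { intros O HO. apply H. right. auto. }
    destruct (H O0 (or_introl eq_refl)) as [M0 HM0].
    exists (Rmax M M0). intros O x i [<- | HO] Hx.
    + eapply Rle_trans. apply HM0; auto. apply Rmax_r.
    + eapply Rle_trans. apply (HM O x i HO Hx). apply Rmax_l.
Qed.

Theorem lemma3p2 :
  forall d : nat, (1 <= d)%nat ->
  exists Cd : R,
  forall (c : R) (C : Obj d -> Prop) (t : nat) (Ct : (Obj d -> Prop) -> Prop),
    1 <= c ->
    (exists l : list (Obj d), forall O, C O <-> In O l) ->
    (forall O, C O -> obj_bounded O) ->
    fat C c ->
    (forall X, Ct X ->
       (forall O, X O -> C O) /\ (exists O, X O) /\ connected_diam_le X t) ->
    exists c' : R,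
      c' <= Cd * c * (INR t + 1) ^ (2 * d) /\
      (forall X, Ct X -> obj_bounded (union_obj X)) /\
      fat (fun U => exists X, Ct X /\ U = union_obj X) c'.
Proof.
  intros d Hd. exists (3 ^ d).
  intros c C t Ct Hc [l Hl] Hbd Hfat HCt.
  set (N := S (3 * t + 1)).
  assert (HN : INR N = 3 * INR t + 2).
  { unfold N. rewrite S_INR, plus_INR, mult_INR. simpl. lra. }
  assert (Ht0 := pos_INR t).
  destruct (list_bound l) as [M HM]. { intros O HO. apply Hbd, Hl, HO. }
  assert (Hub : forall X, Ct X -> obj_bounded (union_obj X)).
  { intros X HX. exists M. intros x [O [HO Hx]] i. apply (HM O); auto.
    apply Hl. apply (proj1 (HCt X HX)). auto. }
  exists (INR N ^ d * c). split; [|split; [exact Hub|]].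
  -
    assert (H1 : INR N ^ d <= 3 ^ d * (INR t + 1) ^ (2 * d)).
    { eapply Rle_trans. apply pow_incr with (y := 3 * (INR t + 1)).
      split. apply pos_INR. rewrite HN. lra.
      rewrite Rpow_mult_distr. apply Rmult_le_compat_l.
      apply pow_le. lra. apply Rle_pow. lra. lia. }
    rewrite Rmult_assoc, (Rmult_comm c), <- Rmult_assoc.
    apply Rmult_le_compat_r; lra.
  - intros r a Hr.
    assert (HNd : 1 <= INR N ^ d). { apply pow_R1_Rle. lra. }
    destruct (Rle_lt_or_eq_dec 0 r Hr) as [Hrp | Hr0].
    2:{ subst r. exists (a :: nil). split.
        { change (INR 1 <= INR N ^ d * c). pose proof (Rmult_le_compat 1 (INR N ^ d) 1 c ltac:(lra) ltac:(lra) HNd Hc). simpl INR at 1. lra. }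
        intros U _ _ [x [Hx Hbx]]. exists a. split. left. reflexivity.
        replace a with x; auto. apply functional_extensionality. intro i.
        specialize (Hbx i). lra. }
    set (r' := r / (INR t + 2)).
    assert (Hr' : 0 < r'). { unfold r'. apply Rdiv_lt_0_compat; lra. }
    assert (Hrr : r = (INR t + 2) * r'). { unfold r'. field. lra. }
    assert (Hch : forall a, exists P : list (point d), INR (length P) <= c /\
      forall O, C O -> size_at_least O r' -> intersects O (box a r') ->
        exists p, In p P /\ O p).
    { intro a0. apply Hfat. lra. }
    set (Pts := fun a0 => proj1_sig (constructive_indefinite_description _ (Hch a0))).
    assert (HPts : forall a0, INR (length (Pts a0)) <= c /\
      forall O, C O -> size_at_least O r' -> intersects O (box a0 r') ->
        exists p, In p (Pts a0) /\ O p).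
    { intro a0. unfold Pts. destruct (constructive_indefinite_description _ (Hch a0)). auto. }
    set (b := fun i => a i - INR t * r').
    exists (flat_map (fun f => Pts (fun i => b i + INR (f i) * r')) (grid N (all_fin d))).
    split.
    { eapply Rle_trans. apply len_flat with (c := c). lra. intro f. apply (proj1 (HPts _)).
      apply Rmult_le_compat_r. lra. pose proof (grid_len N (all_fin d)).
      rewrite all_fin_len in H. auto. }
    intros U [X [HX ->]] [s [Hs Hrs]] [x0 [[O0 [HO0 Hx0]] Hbx0]].
    destruct (HCt X HX) as [HXC [Hne Hcd]].
    destruct (classic (exists O, X O /\ ~ small r' O)) as [[Ob [HXb Hnb]] | Hall].
    + destruct (Hcd O0 Ob HO0 HXb) as [n [Hn Hw]].
      destruct (walk_first r' X O0 Ob n (Rlt_le _ _ Hr') Hw Hnb a r 0 x0 Hx0)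
        as [O'' [y [HX'' [Hns [Hy Hyr]]]]].
      { intro i. specialize (Hbx0 i). lra. }
      assert (Hsz : size_at_least O'' r').
      { destruct (size_exists O'') as [s'' Hs'']. eauto. apply Hbd. auto.
        exists s''. split; auto. destruct (Rle_or_lt r' s'') as [Hle|Hlt]; auto.
        exfalso. apply Hns. destruct Hs'' as [_ [[a'' Ha''] _]].
        exists a''. intros z Hz i. specialize (Ha'' z Hz i). lra. }
      destruct (grid_complete N (fun i k => b i + INR k * r' <= y i <= b i + INR k * r' + r')
                  (all_fin d)) as [f [Hf Hfp]].
      { intros i _. destruct (cell (3 * t + 1) r' (y i - b i)) as [k [Hk Hk2]]; auto.
        { fold N. rewrite HN. specialize (Hyr i). unfold b.
          assert (INR n <= INR t) by (apply le_INR; auto).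
          assert (INR n * r' <= INR t * r') by (apply Rmult_le_compat_r; lra). nra. }
        exists k. split. unfold N. lia. lra. }
      destruct ((proj2 (HPts (fun i => b i + INR (f i) * r'))) O'' (HXC _ HX'') Hsz)
        as [p [Hp HO''p]].
      { exists y. split; auto. intro i. apply Hfp. apply all_fin_in. }
      exists p. split.
      * apply in_flat_map. exists f. auto.
      * exists O''. auto.
    + exfalso.
      assert (Hsm : forall O, X O -> small r' O).
      { intros O HO. apply NNPP. intro H. apply Hall. eauto. }
      destruct (box_of_diff (union_obj X) ((INR t + 1) * r')) as [a' Ha'].
      { exists x0. exists O0. auto. }
      { apply Hub. auto. }
      { intros x x' i [O [HO Hx]] [O' [HO' Hx']].
        destruct (Hcd O O' HO HO') as [n [Hn Hw]].
        pose proof (walk_diam r' X O O' n Hw Hsm x x' i Hx Hx').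
        assert (INR (S n) <= INR t + 1) by (rewrite <- S_INR; apply le_INR; lia).
        assert (INR (S n) * r' <= (INR t + 1) * r') by (apply Rmult_le_compat_r; lra).
        lra. }
      destruct Hs as [_ [_ Hmin]].
      assert (s <= (INR t + 1) * r').
      { apply (Hmin _ a'). nra. auto. }
      nra.
Qed.
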